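(* Consider a multi-sender single-uniprior index-coding instance with binary messages, information-flow graph $\mathcal{G}$ and message graph $\mathcal{U}$, and let $\mathcal{V}_S$ be the vertex set of a leaf SCC of $\mathcal{G}$. Form $(\mathcal{G}',\mathcal{U}')$ by pruning this leaf SCC: select an arbitrary $v\in\mathcal{V}_S$ and remove all outgoing arcs of $v$ from $\mathcal{G}$ (the message graph and senders are unchanged). Then \[ N_{\mathrm{SCC}}(\mathcal{G}')=N_{\mathrm{SCC}}(\mathcal{G})-1,\qquad \tilde{\ell}^*(\mathcal{G}',\mathcal{U}')\le\tilde{\ell}^*(\mathcal{G},\mathcal{U}),\qquad V_{\mathrm{out}}(\mathcal{G}')=V_{\mathrm{out}}(\mathcal{G})-1, \] where $N_{\mathrm{SCC}}(\cdot)$ denotes the number of leaf SCCs.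
   Context: Multi-sender single-uniprior index coding with binary messages: there are $n$ receivers and $n$ independent messages $x_1,\dots,x_n$, each a single bit uniformly distributed on $\{0,1\}$. Receiver $i$ knows $x_i$ a priori and requests a set of messages not containing $x_i$. The information-flow graph is the directed graph $\mathcal{G}=(\mathcal{V},\mathcal{A})$ with an arc $(j\to i)$ iff receiver $i$ requests $x_j$. There are $S$ senders; sender $s$ knows a subset $\mathcal{M}_s$ of the messages, and every message is known to some sender. An index code consists of, for each sender $s$, an encoding function mapping the messages in $\mathcal{M}_s$ to $\ell_s$ bits, and for each receiver $i$ a decoding function that, from all senders' outputs together with $x_i$, returns every message requested by $i$, for all message values; its length is $\sum_s \ell_s$. $\tilde{\ell}^*(\mathcal{G},\mathcal{U})$ is the minimum length of an index code for the instance. The message graph $\mathcal{U}$ is the undirected graph on $\mathcal{V}$ with an edge $\{i,j\}$ iff some sender knows both $x_i$ and $x_j$. A leaf vertex of $\mathcal{G}$ has no outgoing arcs; $V_{\mathrm{out}}(\mathcal{G})$ is the number of non-leaf vertices. A leaf SCC is a strongly connected component of $\mathcal{G}$ with at least two vertices and no arc from it to a vertex outside it. *)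

(* Defs.v *)
From mathcomp Require Import all_boot.
Set Implicit Arguments. Unset Strict Implicit. Unset Printing Implicit Defensive.

(* Vertices / receivers / messages are indexed by 'I_n.
   The information-flow graph is a relation G : rel 'I_n with
   G j i  <=>  arc (j -> i)  <=>  receiver i requests message x_j.
   Senders are indexed by 'I_S; sender s knows the messages in M s. *)

Definition msgs (n : nat) := {ffun 'I_n -> bool}.

Definition is_index_code (n S : nat) (G : rel 'I_n) (M : 'I_S -> {set 'I_n})
    (l : 'I_S -> nat) (E : 'I_S -> msgs n -> seq bool)
    (D : 'I_n -> 'I_n -> ('I_S -> seq bool) -> bool -> bool) : Prop :=
  (forall s x, size (E s x) = l s) /\
  (forall s (x y : msgs n), (forall j, j \in M s -> x j = y j) -> E s x = E s y) /\
  (forall i j (x : msgs n), G j i -> D i j (fun s => E s x) (x i) = x j).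

Definition achievable (n S : nat) (G : rel 'I_n) (M : 'I_S -> {set 'I_n}) (L : nat) : Prop :=
  exists l E D, @is_index_code n S G M l E D /\ \sum_(s < S) l s = L.

Definition min_length (n S : nat) (G : rel 'I_n) (M : 'I_S -> {set 'I_n}) (L : nat) : Prop :=
  achievable G M L /\ forall L', achievable G M L' -> L <= L'.

Definition scc (n : nat) (G : rel 'I_n) (v : 'I_n) : {set 'I_n} :=
  [set u | connect G v u && connect G u v].

Definition is_leaf_scc (n : nat) (G : rel 'I_n) (C : {set 'I_n}) : bool :=
  [&& [exists v, C == scc G v], 2 <= #|C| &
      [forall u, forall w, (u \in C) && G u w ==> (w \in C)]].

Definition N_SCC (n : nat) (G : rel 'I_n) : nat :=
  #|[set C : {set 'I_n} | is_leaf_scc G C]|.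

Definition V_out (n : nat) (G : rel 'I_n) : nat :=
  #|[set v : 'I_n | [exists w, G v w]]|.

Definition prune (n : nat) (G : rel 'I_n) (v : 'I_n) : rel 'I_n :=
  [rel a b | (a != v) && G a b].

(* Main.v *)
Require Import Defs.
From mathcomp Require Import all_boot.
From Stdlib Require Classical.
Set Implicit Arguments. Unset Strict Implicit. Unset Printing Implicit Defensive.

Section Aux.
Variable n : nat.
Implicit Types (G : rel 'I_n).

Lemma conn_closed G (D : {set 'I_n}) x y :
  (forall u w, u \in D -> G u w -> w \in D) -> x \in D -> connect G x y -> y \in D.
Proof.
move=> cl Dx /connectP [p]; elim: p x Dx => [|z p IH] x Dx /=.
  by move=> _ ->.
by move=> /andP [exz pz] e; apply: (IH z) => //; exact: cl exz.
Qed.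

Lemma conn_restr G (G' : rel 'I_n) (D : {set 'I_n}) x y :
  (forall u w, u \in D -> G u w -> w \in D) ->
  (forall u w, u \in D -> G u w -> G' u w) ->
  x \in D -> connect G x y -> connect G' x y.
Proof.
move=> cl sub Dx /connectP [p]; elim: p x Dx => [|z p IH] x Dx /=.
  by move=> _ ->; exact: connect0.
move=> /andP [exz pz] e; rewrite e; apply: (connect_trans (connect1 (sub _ _ Dx exz))).
rewrite -e.
by apply: (IH z) => //; exact: cl exz.
Qed.

Lemma prune_sub G v a b : prune G v a b -> G a b.
Proof. by rewrite /= => /andP []. Qed.

Lemma conn_prune_sub G v x y : connect (prune G v) x y -> connect G x y.
Proof.
apply: connect_sub => a b /prune_sub h; exact: connect1.
Qed.

Lemma conn_prune_v G v u : connect (prune G v) v u -> u = v.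
Proof.
move/connectP => [[|z p]] /=; first by move=> _ ->.
by case/andP => /andP [] /eqP.
Qed.

Lemma scc_self G w : w \in scc G w.
Proof. by rewrite inE connect0. Qed.

Lemma scc_eq G w v : v \in scc G w -> scc G w = scc G v.
Proof.
rewrite inE => /andP [wv vw]; apply/setP => u; rewrite !inE.
apply/andP/andP => [[wu uw]|[vu uv]]; split.
- exact: connect_trans vw wu.
- exact: connect_trans uw wv.
- exact: connect_trans wv vu.
- exact: connect_trans uv vw.
Qed.

Lemma leaf_prune G C v D : is_leaf_scc G C -> v \in C ->
  is_leaf_scc (prune G v) D = is_leaf_scc G D && (D != C).
Proof.
case/and3P => /existsP [x0 /eqP Cx0] cardC /forallP clC vC.
have clC' : forall u w, u \in C -> G u w -> w \in C.
  by move=> u w uC guw; move: (forallP (clC u) w); rewrite uC guw.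
apply/idP/idP.
- case/and3P => /existsP [w /eqP Dw] cardD /forallP clD.
  have clD' : forall u w, u \in D -> prune G v u w -> w \in D.
    by move=> u w' uD guw; move: (forallP (clD u) w'); rewrite uD guw.
  have vD : v \notin D.
    apply/negP => vD.
    have : D \subset [set v].
      apply/subsetP => u uD; rewrite inE; apply/eqP; apply: conn_prune_v.
      move: vD uD; rewrite Dw !inE => /andP [_ vw] /andP [wu _].
      exact: connect_trans vw wu.
    by move/subset_leq_card; rewrite cards1 => h; move: (leq_trans cardD h).
  have clDG : forall u w, u \in D -> G u w -> w \in D.
    move=> u w' uD guw; apply: (clD' u) => //=.
    apply/andP; split => //; apply/eqP => e; move: vD; by rewrite -e uD.
  apply/andP; split; last by apply/eqP => e; move: vD; rewrite e vC.
  apply/and3P; split => //.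
  + apply/existsP; exists w; apply/eqP/setP => u.
    have wD : w \in D by rewrite Dw scc_self.
    rewrite [in RHS]inE; apply/idP/andP.
    * rewrite {1}Dw inE => /andP [h1 h2]; split; [exact: (conn_prune_sub h1) | exact: (conn_prune_sub h2)].
    * by case=> h _; exact: conn_closed clDG wD h.
  + apply/forallP => u; apply/forallP => w'; apply/implyP => /andP [uD guw].
    exact: clDG guw.
- case/andP => /and3P [/existsP [w /eqP Dw] cardD /forallP clD] DC.
  have clD' : forall u w, u \in D -> G u w -> w \in D.
    by move=> u w' uD guw; move: (forallP (clD u) w'); rewrite uD guw.
  have vD : v \notin D.
    apply/negP => vD; move/eqP: DC; apply.
    by rewrite Dw Cx0 (scc_eq (_ : v \in scc G w)) -?Dw // (scc_eq (_ : v \in scc G x0)) -?Cx0.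
  have subp : forall u w, u \in D -> G u w -> prune G v u w.
    move=> u w' uD guw; apply/andP; split => //; apply/eqP => e; move: vD; by rewrite -e uD.
  have wD : w \in D by rewrite Dw scc_self.
  apply/and3P; split => //.
  + apply/existsP; exists w; apply/eqP/setP => u.
    rewrite [in RHS]inE; apply/idP/andP.
    * move=> uD; move: (uD); rewrite {1}Dw inE => /andP [h1 h2]; split.
      - exact: conn_restr clD' subp wD h1.
      - exact: conn_restr clD' subp uD h2.
    * by case=> h _; exact: conn_closed clD' wD (conn_prune_sub h).
  + apply/forallP => u; apply/forallP => w'; apply/implyP => /andP [uD guw].
    exact: clD' (prune_sub guw).
Qed.

End Aux.

Lemma exmin (P : nat -> Prop) L : P L -> exists m, P m /\ forall k, P k -> m <= k.
Proof.
elim: L {-2}L (leqnn L) => [|N IH] L hL PL.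
  by exists L; split => // k _; move: hL; rewrite leqn0 => /eqP ->.
case: (Classical_Prop.classic (exists k, k < L /\ P k)) => [[k [hk Pk]]|H].
  by apply: (IH k) => //; rewrite -ltnS; exact: leq_trans hk hL.
exists L; split => // k Pk; rewrite leqNgt; apply/negP => hk; apply: H; exists k; by [].
Qed.

Theorem proposition3 (n S : nat) (G : rel 'I_n) (M : 'I_S -> {set 'I_n})
    (C : {set 'I_n}) (v : 'I_n) :
  (forall i : 'I_n, ~~ G i i) ->
  (forall j : 'I_n, exists s : 'I_S, j \in M s) ->
  is_leaf_scc G C -> v \in C ->
  N_SCC (prune G v) = N_SCC G - 1 /\
  (forall L, min_length G M L ->
     exists L', min_length (prune G v) M L' /\ L' <= L) /\
  V_out (prune G v) = V_out G - 1.
Proof.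
move=> _ _ lC vC; split; last split.
- rewrite /N_SCC.
  have -> : [set D | is_leaf_scc (prune G v) D] = [set D | is_leaf_scc G D] :\ C.
    by apply/setP => D; rewrite !inE (leaf_prune D lC vC) andbC.
  by rewrite [in RHS](cardsD1 C) inE lC add1n subSS subn0.
- move=> L [[l [E [D [[h1 [h2 h3] hs]]]]] _].
  have aP : achievable (prune G v) M L.
    exists l, E, D; split => //; split => //; split => // i j x /prune_sub; exact: h3.
  have [m [Pm mmin]] := exmin aP.
  by exists m; split => //; apply: mmin.
- rewrite /V_out.
  have -> : [set u | [exists w, prune G v u w]] = [set u | [exists w, G u w]] :\ v.
    apply/setP => u; rewrite !inE; apply/existsP/andP => [[w /andP [uv guw]]|[uv /existsP [w guw]]].
      by split => //; apply/existsP; exists w.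
    by exists w; apply/andP.
  rewrite [in RHS](cardsD1 v) [v \in _]inE.
  have -> : [exists w, G v w].
    case/and3P: lC => /existsP [x0 /eqP Cx0] cardC _.
    have [u [uC uv]] : exists u, u \in C /\ u != v.
      case: (boolP [exists u, (u \in C) && (u != v)]) => [/existsP [u /andP [? ?]]|/existsPn H].
        by exists u.
      have : C \subset [set v].
        apply/subsetP => u uC; rewrite inE; move: (H u); rewrite uC /= negbK; by [].
      by move/subset_leq_card; rewrite cards1 => h; move: (leq_trans cardC h).
    have : connect G v u.
      move: vC uC; rewrite Cx0 !inE => /andP [_ h1] /andP [h2 _]; exact: connect_trans h1 h2.
    move/connectP => [[|z p]] /=; first by move=> _ e; move: uv; rewrite e eqxx.
    by move=> /andP [gvz _] _; apply/existsP; exists z.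
  by rewrite add1n subSS subn0.
Qed.
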